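(* Let $B\subset\Delta^{re}_+$ and let $\preceq$ be a total order on $B$ satisfying condition CO(ii): whenever $\beta\in B$, $\gamma\in\Delta_+\setminus B$ and $\beta+\gamma\in B$, then $\beta\prec\beta+\gamma$. Then: (1) If $m\delta+\varepsilon$ and $(m+k)\delta+\varepsilon$ both lie in $B$, where $m\in\mathbb Z_{\ge0}$, $k\in\mathbb N$ and $\varepsilon\in\mathring\Delta$, then $m\delta+\varepsilon\prec(m+k)\delta+\varepsilon$. (2) $\preceq$ is a well-order on $B$. (3) If $B=\langle P\rangle$ for some $P\subset\mathring\Delta$, then $B$ has no maximum element with respect to $\preceq$.
   Context: Let $\Delta$ be the root system of an untwisted affine Lie algebra, with null root $\delta$. Let $\mathring\Delta$ be the finite (classical) root system of the underlying finite-dimensional simple Lie algebra. Let $\mathring\Delta_+$ be its positive roots and $\mathring\Delta_-=-\mathring\Delta_+$. Write $\mathbb N=\{1,2,\dots\}$. The positive roots are $\Delta_+=\Delta^{re}_+\amalg\Delta^{im}_+$, where $\Delta^{im}_+=\{n\delta:n\in\mathbb N\}$ and $\Delta^{re}_+=\{m\delta+\varepsilon: m\in\mathbb Z_{\geq 0},\varepsilon\in\mathring\Delta_+\}\cup\{m\delta+\varepsilon: m\in\mathbb N,\varepsilon\in\mathring\Delta_-\}$. For $\varepsilon\in\mathring\Delta$, put $\langle\varepsilon\rangle=\{m\delta+\varepsilon: m\in\mathbb Z_{\ge0}\}\cap\Delta_+$. For $P\subset\mathring\Delta$, put $\langle P\rangle=\bigcup_{\varepsilon\in P}\langle\varepsilon\rangle$.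 *)

(* Defs.v *)
From mathcomp Require Import all_boot all_order all_algebra.
Set Implicit Arguments. Unset Strict Implicit. Unset Printing Implicit Defensive.
Import Order.TTheory GRing.Theory Num.Theory.
Local Open Scope ring_scope.

Section RootSystems.
Variables (R : realFieldType) (n : nat).

Definition dotr (u v : 'rV[R]_n) : R := (u *m v^T) 0 0.

Definition is_root_system (Phi : seq 'rV[R]_n) : Prop :=
  [/\ (0 : 'rV[R]_n) \notin Phi,
      (forall v, (forall a, a \in Phi -> dotr a v = 0) -> v = 0),
      (forall a b, a \in Phi -> b \in Phi ->
          b - (2 * dotr b a / dotr a a) *: a \in Phi),
      (forall a b, a \in Phi -> b \in Phi ->
          exists z : int, 2 * dotr b a / dotr a a = z%:~R) &
      (forall (a : 'rV[R]_n) (c : R), a \in Phi -> c *: a \in Phi ->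
          c = 1 \/ c = -1)].

Definition irreducible_rs (Phi : seq 'rV[R]_n) : Prop :=
  Phi != [::] /\
  forall X : 'rV[R]_n -> Prop,
    (forall a b, a \in Phi -> b \in Phi -> X a -> ~ X b -> dotr a b = 0) ->
    (forall a, a \in Phi -> X a) \/ (forall a, a \in Phi -> ~ X a).

(* t is a regular vector: it defines the positive system {a | (t,a) > 0} *)
Definition regular_vec (Phi : seq 'rV[R]_n) (t : 'rV[R]_n) : Prop :=
  forall a, a \in Phi -> dotr t a != 0.

Definition fpos (Phi : seq 'rV[R]_n) (t a : 'rV[R]_n) : Prop :=
  a \in Phi /\ 0 < dotr t a.
Definition fneg (Phi : seq 'rV[R]_n) (t a : 'rV[R]_n) : Prop :=
  a \in Phi /\ dotr t a < 0.

(* Affine roots: the element m*delta + v is encoded as the pair (m, v). *)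
Definition aroot := (int * 'rV[R]_n)%type.
Definition aadd (x y : aroot) : aroot := (x.1 + y.1, x.2 + y.2).

Definition re_pos (Phi : seq 'rV[R]_n) (t : 'rV[R]_n) (x : aroot) : Prop :=
  (0 <= x.1 /\ fpos Phi t x.2) \/ (1 <= x.1 /\ fneg Phi t x.2).
Definition im_pos (x : aroot) : Prop := 1 <= x.1 /\ x.2 = 0.
Definition apos (Phi : seq 'rV[R]_n) (t : 'rV[R]_n) (x : aroot) : Prop :=
  re_pos Phi t x \/ im_pos x.

Definition span_of (Phi : seq 'rV[R]_n) (t : 'rV[R]_n)
  (P : 'rV[R]_n -> Prop) (x : aroot) : Prop :=
  P x.2 /\ 0 <= x.1 /\ apos Phi t x.

Definition total_order_on (B : aroot -> Prop) (le : aroot -> aroot -> Prop) :=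
  [/\ (forall x, B x -> le x x),
      (forall x y, B x -> B y -> le x y -> le y x -> x = y),
      (forall x y z, B x -> B y -> B z -> le x y -> le y z -> le x z) &
      (forall x y, B x -> B y -> le x y \/ le y x)].

Definition strict (le : aroot -> aroot -> Prop) x y := le x y /\ x <> y.

End RootSystems.

(* Main.v *)
Require Import Defs.
From mathcomp Require Import all_boot all_order all_algebra.
From mathcomp Require Import zify.
From Stdlib Require Import Classical.
Import Order.TTheory GRing.Theory Num.Theory.
Local Open Scope ring_scope.

Theorem lemma7p4 (R : realFieldType) (n : nat) (Phi : seq 'rV[R]_n)
  (t : 'rV[R]_n)
  (HPhi : is_root_system Phi) (Hirr : irreducible_rs Phi)
  (Ht : regular_vec Phi t)
  (B : aroot R n -> Prop) (le : aroot R n -> aroot R n -> Prop)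
  (HB : forall x, B x -> re_pos Phi t x)
  (Hle : total_order_on B le)
  (CO2 : forall beta gamma, B beta -> apos Phi t gamma -> ~ B gamma ->
           B (aadd beta gamma) -> strict le beta (aadd beta gamma)) :
  [/\ (forall (m : int) (k : nat) (eps : 'rV[R]_n),
         0 <= m -> (0 < k)%N -> eps \in Phi ->
         B (m, eps) -> B (m + k%:Z, eps) -> strict le (m, eps) (m + k%:Z, eps)),
      (forall S : aroot R n -> Prop, (forall x, S x -> B x) -> (exists x, S x) ->
         exists x, S x /\ forall y, S y -> le x y) &
      (forall P : 'rV[R]_n -> Prop, (forall e, P e -> e \in Phi) ->
         (forall x, B x <-> span_of Phi t P x) ->
         ~ exists x, B x /\ forall y, B y -> le y x)].
Proof.
case: Hle => Hrefl Hanti Htrans Htot.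
have HB2 : forall x, B x -> x.2 \in Phi /\ 0 <= x.1.
  move=> x /HB [[h1 [h2 _]]|[h1 [h2 _]]]; split => //.
  by apply: le_trans h1.
have P1 : forall (m : int) (k : nat) (eps : 'rV[R]_n),
         0 <= m -> (0 < k)%N -> eps \in Phi ->
         B (m, eps) -> B (m + k%:Z, eps) -> strict le (m, eps) (m + k%:Z, eps).
  move=> m k eps hm hk heps Bx By.
  have := CO2 (m, eps) (k%:Z, 0) Bx.
  rewrite /aadd /= addr0; apply => //.
    by right; split => //=; lia.
  move/HB2 => [/= h _]; case: HPhi => /negP; done.
split => //.
-
  have Cmin : forall (eps : 'rV[R]_n) (S : aroot R n -> Prop),
      (forall x, S x -> B x) -> forall (N : nat) x, S x -> x.2 = eps -> x.1 = N%:Z ->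
      exists x, [/\ S x, x.2 = eps & forall y, S y -> y.2 = eps -> le x y].
    move=> eps S SB N; elim: N {-2}N (leqnn N) => [|N IH] M hM x Sx hx hN.
    + exists x; split => // y Sy hy.
      case: (HB2 _ (SB _ Sy)) => hyP hy0.
      case: x Sx hx hN => [m e] Sx /= hx hN.
      case: y Sy hy hyP hy0 => [m' e'] Sy /= hy hyP hy0.
      have hM0 : M = 0%N by lia.
      rewrite hM0 in hN; rewrite hN in Sx *; rewrite hx in Sx *; rewrite hy in Sy hyP *.
      have [->|hne] := eqVneq m' 0.
        by apply: Hrefl; apply: SB.
      have hk : (0 < `|m'|%N)%N by lia.
      have := P1 0 `|m'|%N eps (lexx _) hk hyP (SB _ Sx).
      have -> : 0 + `|m'|%N%:Z = m' by lia.
      by move=> /(_ (SB _ Sy)) [].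
    + case: (classic (exists y, S y /\ y.2 = eps /\ y.1 < x.1)).
        move=> [y [Sy [hy hlt]]].
        case: (HB2 _ (SB _ Sy)) => _ hy0.
        apply: (IH `|y.1|%N) Sy hy _; lia.
      move=> hno; exists x; split => // y Sy hy.
      case: (HB2 _ (SB _ Sy)) => hyP hy0.
      case: (HB2 _ (SB _ Sx)) => hxP hx0.
      have hge : x.1 <= y.1.
        rewrite leNgt; apply/negP => hlt; apply: hno; by exists y.
      case: x Sx hx hN hno hge hxP hx0 => [m e] Sx /= hx hN hno hge hxP hx0.
      case: y Sy hy hyP hy0 hge => [m' e'] Sy /= hy hyP hy0 hge.
      rewrite hN in Sx hge hx0 *; rewrite hx in Sx hxP *; rewrite hy in Sy hyP *.
      have [->|hne] := eqVneq m' M%:Z.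
        by apply: Hrefl; apply: SB.
      have hk : (0 < `|m' - M%:Z|%N)%N by lia.
      have := P1 M%:Z `|m' - M%:Z|%N eps hx0 hk hyP (SB _ Sx).
      have -> : M%:Z + `|m' - M%:Z|%N%:Z = m' by lia.
      by move=> /(_ (SB _ Sy)) [].
  have Lmin : forall (L : seq 'rV[R]_n) (S : aroot R n -> Prop),
      (forall x, S x -> B x /\ x.2 \in L) -> (exists x, S x) ->
      exists x, S x /\ forall y, S y -> le x y.
    elim => [|a L IH] S SL [x Sx].
      by case: (SL _ Sx).
    have SB : forall x, S x -> B x by move=> ? /SL [].
    case: (classic (exists y, S y /\ y.2 = a)) => [[y [Sy hy]]|hnoa].
    - have [x0 [Sx0 hx0 hmin0]] := Cmin a S SB `|y.1|%N y Sy hy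
          ltac:(case: (HB2 _ (SB _ Sy)) => _ ?; lia).
      case: (classic (exists y, S y /\ y.2 <> a)) => [[z [Sz hz]]|hnob].
      + have [x1 [[Sx1 hx1] hmin1]] := IH (fun x => S x /\ x.2 <> a)
            ltac:(move=> w [Sw hw]; case: (SL _ Sw) => Bw; rewrite inE;
                  case/orP => [/eqP//|->]; by split)
            ltac:(by exists z).
        case: (Htot x0 x1 (SB _ Sx0) (SB _ Sx1)) => h.
        * exists x0; split => // w Sw.
          case: (classic (w.2 = a)) => hw; first by apply: hmin0.
          apply: Htrans h _ => //; try by apply: SB.
          by apply: hmin1.
        * exists x1; split => // w Sw.
          case: (classic (w.2 = a)) => hw; last by apply: hmin1.
          apply: Htrans h _ => //; try by apply: SB.
          by apply: hmin0.
      + exists x0; split => // w Sw; apply: hmin0 => //.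
        by apply: NNPP => hw; apply: hnob; exists w.
    - apply: IH => [w Sw|]; last by exists x.
      case: (SL _ Sw) => Bw; rewrite inE; case/orP => [/eqP hw|->]; last by [].
      by case: hnoa; exists w.
  move=> S SB hex; apply: (Lmin Phi) => // x Sx; split; first exact: SB.
  by case: (HB2 _ (SB _ Sx)).
- move=> P _ HBP [[m e] [Bx hmax]].
  case: (HB2 _ Bx) => /= heP hm0.
  have By : B (m + 1%N%:Z, e).
    case/HBP: Bx => /= hPe [_ hap]; apply/HBP; split => //; split; first by rewrite /=; lia.
    case: hap => [[[h1 h2]|[h1 h2]]|[_ /= h]].
    + by left; left; split; [rewrite /=; lia | exact: h2].
    + by left; right; split; [rewrite /=; lia | exact: h2].
    + by rewrite h in heP; case: HPhi => /negP.
  have [hl hne] := P1 m 1%N e hm0 isT heP Bx By.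
  by apply: hne; apply: Hanti => //; apply: hmax.
Qed.
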